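(* Let $m>0$, $\sigma>0$, and let $\theta$ be the distribution of $|X|$ where $X$ follows the normal law $\mathcal{N}(m,\sigma^2)$, with density $f_\theta(t)=\frac{1}{\sigma\sqrt{2\pi}}\left[\exp\left(-\frac12\left(\frac{t-m}{\sigma}\right)^2\right)+\exp\left(-\frac12\left(\frac{t+m}{\sigma}\right)^2\right)\right]$ for $t\ge0$. Then there exists $t^*\in[0,m)$ such that $f'_\theta(t)>0$ for all $t\in(0,t^* )$ and $f'_\theta(t)<0$ for all $t\in(t^*,\infty)$. Moreover, such $t^*$ satisfies $(t^* )^2\geq m^2-\sigma^2$. *)

(* Defs.v *)
From Stdlib Require Import Reals.
From Coquelicot Require Import Coquelicot.
Open Scope R_scope.

Definition f_theta (m sigma : R) (t : R) : R :=
  / (sigma * sqrt (2 * PI)) *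
  (exp (- / 2 * ((t - m) / sigma) ^ 2) + exp (- / 2 * ((t + m) / sigma) ^ 2)).

(* Main.v *)
Require Import Defs.
From Stdlib Require Import Reals Lra ssreflect.
From Coquelicot Require Import Coquelicot.
Open Scope R_scope.

Section S.
Variables m s : R.
Hypothesis hm : 0 < m.
Hypothesis hs : 0 < s.

Definition kk (t : R) := (m - t) * exp (2 * m * t / s ^ 2) - (m + t).
Definition hh (t : R) := ln (m - t) - ln (m + t) + 2 * m * t / s ^ 2.
Definition dh (t : R) := - / (m - t) - / (m + t) + 2 * m / s ^ 2.

Lemma sqrt2pi_pos : 0 < sqrt (2 * PI).
Proof. apply sqrt_lt_R0. generalize PI_RGT_0; lra. Qed.

Lemma Derive_f t : Derive (f_theta m s) t =
  / (s * sqrt (2 * PI)) / s ^ 2 * exp (- / 2 * ((t + m) / s) ^ 2) * kk t.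
Proof.
  have Hp := sqrt2pi_pos.
  assert (E : exp (- / 2 * ((t - m) / s) ^ 2) =
    exp (- / 2 * ((t + m) / s) ^ 2) * exp (2 * m * t / s ^ 2)).
  { rewrite <- exp_plus. f_equal. field. lra. }
  apply is_derive_unique. unfold f_theta, kk.
  auto_derive. { auto. }
  rewrite E. replace (exp (- / 2 * ((t + m) * / s * ((t + m) * / s * 1)))) with (exp (- / 2 * ((t + m) / s) ^ 2)) by (f_equal; field; lra). field. split; lra.
Qed.

Lemma dh_is c : -m < c < m -> derivable_pt_lim hh c (dh c).
Proof.
  intros Hc. apply is_derive_Reals. unfold hh, dh. auto_derive.
  { lra. } field. lra.
Qed.

Lemma dh_sign c : 0 <= c < m ->
  dh c = 2 * m * (m^2 - c^2 - s^2) / (s^2 * (m^2 - c^2)).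
Proof. intros Hc. unfold dh. field. nra. Qed.

Lemma dh_pos c : 0 <= c < m -> c ^ 2 < m^2 - s^2 -> 0 < dh c.
Proof.
  intros Hc H. rewrite dh_sign //. apply Rdiv_lt_0_compat; apply Rmult_lt_0_compat; try nra.
Qed.

Lemma dh_neg c : 0 <= c < m -> m^2 - s^2 < c ^ 2 -> dh c < 0.
Proof.
  intros Hc H. rewrite dh_sign //. unfold Rdiv.
  assert (0 < / (s ^ 2 * (m ^ 2 - c ^ 2))).
  { apply Rinv_0_lt_compat; apply Rmult_lt_0_compat; nra. }
  have : 2 * m * (m ^ 2 - c ^ 2 - s ^ 2) < 0 by nra.
  nra.
Qed.

Lemma kk_hh t : 0 <= t < m -> kk t = (m + t) * (exp (hh t) - 1).
Proof.
  intros Ht. unfold kk, hh.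
  replace (ln (m - t) - ln (m + t) + 2 * m * t / s ^ 2) with
    (ln (m - t) + (- ln (m + t) + 2 * m * t / s ^ 2)) by ring.
  rewrite !exp_plus exp_Ropp !exp_ln; try lra.
  field. lra.
Qed.

Lemma kk_pos t : 0 <= t < m -> 0 < hh t -> 0 < kk t.
Proof.
  intros Ht H. rewrite kk_hh //. have := exp_increasing _ _ H. rewrite exp_0.
  intros; apply Rmult_lt_0_compat; lra.
Qed.

Lemma kk_neg t : 0 <= t < m -> hh t < 0 -> kk t < 0.
Proof.
  intros Ht H. rewrite kk_hh //. have := exp_increasing _ _ H. rewrite exp_0.
  intros. nra.
Qed.

Lemma kk_big t : m <= t -> kk t < 0.
Proof.
  intros Ht. unfold kk. have := exp_pos (2 * m * t / s ^ 2). nra.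
Qed.

Lemma hh0 : hh 0 = 0.
Proof. unfold hh. replace (m - 0) with (m + 0) by ring. field_simplify; lra. Qed.

Lemma kk_cont : continuity kk.
Proof.
  intros x. apply derivable_continuous_pt.
  exists (Derive kk x). apply is_derive_Reals.
  apply Derive_correct. unfold kk. auto_derive. auto.
Qed.

Lemma hh_incr x y : 0 <= x -> x < y -> y < m ->
  (forall c, x < c < y -> 0 < dh c) -> hh x < hh y.
Proof.
  intros Hx Hxy Hy Hd.
  destruct (MVT_cor2 hh dh x y Hxy) as [c [E Hc]].
  { intros c Hc; apply dh_is; lra. }
  have := Hd c Hc. nra.
Qed.

Lemma hh_decr x y : 0 <= x -> x < y -> y < m ->
  (forall c, x < c < y -> dh c < 0) -> hh y < hh x.
Proof.
  intros Hx Hxy Hy Hd.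
  destruct (MVT_cor2 hh dh x y Hxy) as [c [E Hc]].
  { intros c Hc; apply dh_is; lra. }
  have := Hd c Hc. nra.
Qed.

End S.

Theorem mainTheorem3 (m sigma : R) (hm : 0 < m) (hs : 0 < sigma) :
  exists tstar : R,
    0 <= tstar < m /\
    (forall t : R, 0 < t < tstar -> Derive (f_theta m sigma) t > 0) /\
    (forall t : R, tstar < t -> Derive (f_theta m sigma) t < 0) /\
    tstar ^ 2 >= m ^ 2 - sigma ^ 2.
Proof.
  rename sigma into s.
  assert (HC : forall t, 0 < / (s * sqrt (2 * PI)) / s ^ 2 * exp (- / 2 * ((t + m) / s) ^ 2)).
  { intros t. have := sqrt2pi_pos. intros.
    apply Rmult_lt_0_compat; [|apply exp_pos].
    apply Rdiv_lt_0_compat; [|apply pow_lt; lra]. apply Rinv_0_lt_compat; apply Rmult_lt_0_compat; lra. }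
  assert (Dpos : forall t, 0 < kk m s t -> Derive (f_theta m s) t > 0).
  { intros t H. rewrite Derive_f //. have := HC t. nra. }
  assert (Dneg : forall t, kk m s t < 0 -> Derive (f_theta m s) t < 0).
  { intros t H. rewrite Derive_f //. have := HC t. nra. }
  destruct (Rle_lt_dec m s) as [Hle | Hlt].
  - exists 0. split; [lra|]. split; [intros; lra|]. split; [|nra].
    intros t Ht. apply Dneg.
    destruct (Rlt_le_dec t m) as [Htm|Htm]; [|by apply kk_big].
    apply kk_neg; try lra.
    have Hh : hh m s (t/2) < hh m s 0.
    { apply hh_decr; try lra. intros c Hc. apply dh_neg; try lra. nra. }
    have Hh2 : hh m s t < hh m s (t/2).
    { apply hh_decr; try lra. intros c Hc. apply dh_neg; try lra. nra. }
    rewrite hh0 in Hh; lra.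
  - set t0 := sqrt (m^2 - s^2).
    have Ht0sq : t0 ^ 2 = m^2 - s^2.
    { unfold t0. rewrite pow2_sqrt //. nra. }
    have Ht0p : 0 < t0. { apply sqrt_lt_R0. nra. }
    have Ht0m : t0 < m. { nra. }
    have Hh0 : 0 < hh m s t0.
    { rewrite -(hh0 m s) //. apply hh_incr; try lra.
      intros c Hc. apply dh_pos; try lra. nra. }
    have Hk0 : 0 < kk m s t0 by apply kk_pos; lra.
    destruct (IVT (fun x => - kk m s x) t0 m) as [z [Hz Ez]].
    { apply continuity_opp, kk_cont. }
    { lra. } { lra. } { have := kk_big m s hm m (Rle_refl _). lra. }
    have Kz : kk m s z = 0 by lra.
    have Hzt0 : t0 < z. { destruct (Req_dec z t0); [subst; lra|lra]. }
    have Hzm : z < m. { destruct (Req_dec z m) as [e|]; [|lra].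
      rewrite e in Kz. have := kk_big m s hm m (Rle_refl _). lra. }
    have Hhz : hh m s z = 0.
    { destruct (Rtotal_order (hh m s z) 0) as [H|[H|H]]; auto.
      - have := kk_neg m s hm z ltac:(lra) H. lra.
      - have := kk_pos m s hm z ltac:(lra) H. lra. }
    exists z. split; [lra|]. split; [|split].
    + intros t Ht. apply Dpos. apply kk_pos; try lra.
      destruct (Rle_lt_dec t t0).
      * rewrite -(hh0 m s) //. apply hh_incr; try lra.
        intros c Hc. apply dh_pos; try lra. nra.
      * rewrite -Hhz. apply hh_decr; try lra.
        intros c Hc. apply dh_neg; try lra. nra.
    + intros t Ht. apply Dneg.
      destruct (Rlt_le_dec t m) as [Htm|Htm]; [|by apply kk_big].
      apply kk_neg; try lra. rewrite -Hhz. apply hh_decr; try lra.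
      intros c Hc. apply dh_neg; try lra. nra.
    + nra.
Qed.
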